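(* Let $N=(V,A)$ be a tree-based network and let $A'\subseteq A$. Then $A'$ is the set of arcs of a support tree for $N$ if and only if $A'$ is the union of the set of arboreal arcs of $N$ and (the arcs of $N$ corresponding to the edges of) a supporting set for $\mathcal{J}_N$.
   Context: A phylogenetic network on a nonempty finite set $X$ is a rooted acyclic digraph with no parallel arcs such that: the unique root has out-degree at least one; $X$ is exactly the set of vertices of out-degree zero (leaves), each of in-degree one; every other vertex either has in-degree one and out-degree at least two (a tree vertex) or in-degree at least two and out-degree one (a reticulation). If $|X|=1$, the network may also consist of the single vertex in $X$. An omnian is a non-leaf vertex all of whose children are reticulations. $N$ is tree-based if it has a spanning tree rooted at the root of $N$ all of whose leaves lie in $X$; a support tree for $N$ is such a spanning tree, i.e., a subgraph of $N$ with vertex set $V$ that is a directed tree rooted at the root of $N$ whose leaf set is exactly $X$ (equivalently, a subdivision of a phylogenetic $X$-tree embedded in $N$ using all vertices of $N$). Let $R_t$ be the set of reticulations of $N$ with no reticulation parent, and $Q_t$ the set of vertices of $N$ having a child in $R_t$. $\mathcal{J}_N$ is the bipartite graph with vertex bipartition $\{Q_t,R_t\}$ and an edge $\{q,r\}$ for each arc $(q,r)\in A$ with $q\in Q_t$, $r\in R_t$; each edge is identified with the corresponding arc of $N$. A supporting set for $\mathcal{J}_N$ is a set $E$ of edges of $\mathcal{J}_N$ such that each omnian in $Q_t$ is incident with at least one edge of $E$ and each vertex of $R_t$ is incident with exactly one edge of $E$. An arc $(u,v)$ of $N$ is arboreal if $u$ is a reticulation, or $v$ is a tree vertex or a leaf.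 *)

(* Defs.v *)
From mathcomp Require Import all_boot.
Set Implicit Arguments. Unset Strict Implicit. Unset Printing Implicit Defensive.

Section Net.
Variable V : finType.
Implicit Types (A T E : {set V * V}) (X : {set V}) (u v w : V).

Definition arel A : rel V := fun u v => (u, v) \in A.

Definition indeg A v : nat := #|[set u | (u, v) \in A]|.
Definition outdeg A v : nat := #|[set w | (v, w) \in A]|.

Definition acyclic A : Prop :=
  forall u v, (u, v) \in A -> ~~ connect (arel A) v u.

Definition is_tree_vertex A v : bool := (indeg A v == 1) && (2 <= outdeg A v).
Definition is_reticulation A v : bool := (2 <= indeg A v) && (outdeg A v == 1).

(* N = (V, A) is a phylogenetic network on X; V is the whole vertex type,
   arcs are a set of ordered pairs (so no parallel arcs). *)
Definition phylo_network A X : Prop :=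
  X != set0 /\ acyclic A /\
  (exists r, forall v, (indeg A v == 0) = (v == r)) /\
  ( (#|V| = 1 /\ A = set0 /\ X = setT) \/
    ( (forall v, (v \in X) = (outdeg A v == 0)) /\
      (forall v,
        [|| (indeg A v == 0) && (0 < outdeg A v),
            (v \in X) && (indeg A v == 1),
            is_tree_vertex A v
          | is_reticulation A v]) ) ).

Definition support_tree A X T : Prop :=
  T \subset A /\
  (forall v, indeg A v != 0 -> indeg T v = 1) /\
  (forall r v, indeg A r = 0 -> connect (arel T) r v) /\
  (forall v, (outdeg T v == 0) = (v \in X)).

Definition tree_based A X : Prop := exists T, support_tree A X T.

Definition omnian A X v : bool :=
  (v \notin X) && [forall w, ((v, w) \in A) ==> is_reticulation A w].

Definition Rt A : {set V} :=
  [set r | is_reticulation A r &&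
           [forall u, ((u, r) \in A) ==> ~~ is_reticulation A u]].
Definition Qt A : {set V} := [set q | [exists r in Rt A, (q, r) \in A]].

(* edges of J_N, identified with the corresponding arcs of N *)
Definition J_edges A : {set V * V} :=
  [set e in A | (e.1 \in Qt A) && (e.2 \in Rt A)].

Definition supporting_set A X E : Prop :=
  E \subset J_edges A /\
  (forall q, q \in Qt A -> omnian A X q -> exists r, (q, r) \in E) /\
  (forall r, r \in Rt A -> #|[set q | (q, r) \in E]| = 1).

Definition arboreal A X (e : V * V) : bool :=
  [|| is_reticulation A e.1, is_tree_vertex A e.2 | e.2 \in X].

Definition arboreal_arcs A X : {set V * V} := [set e in A | arboreal A X e].

End Net.

(* Main.v *)
Require Import Defs.
From mathcomp Require Import all_boot.
Set Implicit Arguments. Unset Strict Implicit. Unset Printing Implicit Defensive.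

Lemma card1_eq (T : finType) (S : {set T}) x y : #|S| = 1 -> x \in S -> y \in S -> x = y.
Proof. by move/eqP/cards1P=> [z ->]; rewrite !inE => /eqP-> /eqP->. Qed.

Lemma indeg_pos (V : finType) (A : {set V * V}) u v : (u, v) \in A -> indeg A v != 0.
Proof. by move=> H; rewrite /indeg -lt0n card_gt0; apply/set0Pn; exists u; rewrite inE. Qed.

Lemma indeg_par (V : finType) (A : {set V * V}) v : indeg A v != 0 -> exists u, (u, v) \in A.
Proof. by rewrite /indeg -lt0n card_gt0 => /set0Pn [u]; rewrite inE; exists u. Qed.

Lemma outdeg_ch (V : finType) (A : {set V * V}) v : outdeg A v != 0 -> exists w, (v, w) \in A.
Proof. by rewrite /outdeg -lt0n card_gt0 => /set0Pn [u]; rewrite inE; exists u. Qed.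

Lemma indeg1_uniq (V : finType) (A : {set V * V}) v u w :
  indeg A v = 1 -> (u, v) \in A -> (w, v) \in A -> u = w.
Proof. by move=> H Hu Hw; apply: (card1_eq H); rewrite inE. Qed.

Lemma outdeg1_uniq (V : finType) (A : {set V * V}) v u w :
  outdeg A v = 1 -> (v, u) \in A -> (v, w) \in A -> u = w.
Proof. by move=> H Hu Hw; apply: (card1_eq H); rewrite inE. Qed.

Lemma net_facts (V : finType) (A : {set V * V}) X : phylo_network A X ->
  acyclic A /\ (exists r, forall v, (indeg A v == 0) = (v == r)) /\
  (forall v, (v \in X) = (outdeg A v == 0)) /\
  (forall u v, (u, v) \in A ->
     [|| (v \in X) && (indeg A v == 1), is_tree_vertex A v | is_reticulation A v]).
Proof.
move=> [_ [Hac [Hr [[_ [eA eX]] | [FX FC]]]]].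
- subst A X; split; first exact: Hac. split; first exact: Hr.
  split; last by move=> u v; rewrite inE.
  move=> v; rewrite in_setT; apply/esym/eqP; rewrite /outdeg; apply/eqP.
  by rewrite cards_eq0; apply/eqP/setP => w; rewrite !inE.
- split; first exact: Hac. split; first exact: Hr. split; first exact: FX.
  move=> u v uvA; have := FC v; have := indeg_pos uvA.
  by case: (indeg A v == 0).
Qed.

Lemma conn_root (V : finType) (A T : {set V * V}) r0 : acyclic A -> T \subset A ->
  (forall v, (indeg A v == 0) = (v == r0)) ->
  (forall v, indeg A v != 0 -> indeg T v = 1) ->
  forall r v, indeg A r = 0 -> connect (arel T) r v.
Proof.
move=> Hac sub Hroot Hin r v Hr.
have -> : r = r0 by apply/eqP; rewrite -Hroot Hr.
suff: forall n v, #|[set u | connect (arel A) u v]| < n -> connect (arel T) r0 v.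
  by apply; apply: ltnSn.
elim=> [|n IH] {}v //= Hn.
case: (boolP (indeg A v == 0)) => [|Hv]; first by rewrite Hroot => /eqP->; exact: connect0.
have [p pvT] : exists p, (p, v) \in T.
  by apply: indeg_par; rewrite Hin.
have pvA := subsetP sub _ pvT.
apply: (connect_trans (IH p _)); last by apply: connect1.
rewrite ltnS in Hn; apply: leq_trans _ Hn; apply: proper_card; apply/properP; split.
  apply/subsetP => u; rewrite !inE => Hu.
  by apply: connect_trans Hu (connect1 _).
exists v; first by rewrite inE connect0.
by rewrite inE; apply: Hac.
Qed.

Lemma st_uniq (V : finType) (A T : {set V * V}) (X : {set V}) u w v :
  support_tree A X T -> (u, v) \in T -> (w, v) \in T -> u = w.
Proof.
move=> [sTA [Hin _]] uT wT; apply: (indeg1_uniq _ uT wT).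
by apply: Hin; apply: (indeg_pos (subsetP sTA _ uT)).
Qed.

Lemma ret_notX (V : finType) (A : {set V * V}) (X : {set V}) v :
  (forall v, (v \in X) = (outdeg A v == 0)) -> is_reticulation A v -> (v \in X) = false.
Proof. by move=> FX /andP [_ /eqP H]; rewrite FX H. Qed.

Lemma tree_notX (V : finType) (A : {set V * V}) (X : {set V}) v :
  (forall v, (v \in X) = (outdeg A v == 0)) -> is_tree_vertex A v -> (v \in X) = false.
Proof. by move=> FX /andP [_ H]; rewrite FX; case: (outdeg A v) H. Qed.

Lemma tree_notret (V : finType) (A : {set V * V}) v :
  is_tree_vertex A v -> is_reticulation A v = false.
Proof. by case/andP => /eqP H _; rewrite /is_reticulation H. Qed.

Lemma leafy_indeg1 (V : finType) (A : {set V * V}) (X : {set V}) u v : phylo_network A X ->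
  (u, v) \in A -> is_tree_vertex A v || (v \in X) -> indeg A v = 1.
Proof.
move=> HN uvA H; have [_ [_ [FX FC]]] := net_facts HN.
case/or3P: (FC u v uvA) => [/andP [_ /eqP E]|/andP [/eqP E _]|Rv]; try exact: E.
by move: H; rewrite (ret_notX FX Rv) orbF => /tree_notret; rewrite Rv.
Qed.

Lemma arb_in_tree (V : finType) (A T : {set V * V}) (X : {set V}) : phylo_network A X ->
  support_tree A X T -> forall u v, (u, v) \in arboreal_arcs A X -> (u, v) \in T.
Proof.
move=> HN HT u v; have [sTA [Hin [Hc Hout]]] := HT.
have [_ [_ [FX FC]]] := net_facts HN.
rewrite inE /arboreal /= => /andP [uvA H].
case/orP: H => [Ru|Hv].
  have := Hout u; rewrite (ret_notX FX Ru) => /negbT/outdeg_ch [w uwT].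
  case/andP: Ru => _ /eqP Ru.
  by rewrite (outdeg1_uniq Ru uvA (subsetP sTA _ uwT)).
have H1 := leafy_indeg1 HN uvA Hv.
have [w wvT] : exists w, (w, v) \in T by apply: indeg_par; rewrite Hin ?H1.
by rewrite (indeg1_uniq H1 uvA (subsetP sTA _ wvT)).
Qed.

Lemma inJ (V : finType) (A : {set V * V}) u v : ((u, v) \in J_edges A) = [&& (u, v) \in A, u \in Qt A & v \in Rt A].
Proof. by rewrite /J_edges in_set. Qed.
Lemma inArb (V : finType) (A : {set V * V}) (X : {set V}) u v : ((u, v) \in arboreal_arcs A X) =
  ((u, v) \in A) && [|| is_reticulation A u, is_tree_vertex A v | v \in X].
Proof. by rewrite /arboreal_arcs in_set. Qed.
Lemma inRt (V : finType) (A : {set V * V}) r : (r \in Rt A) =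
  is_reticulation A r && [forall u, ((u, r) \in A) ==> ~~ is_reticulation A u].
Proof. by rewrite /Rt in_set. Qed.
Lemma inQt (V : finType) (A : {set V * V}) q : (q \in Qt A) = [exists r, (r \in Rt A) && ((q, r) \in A)].
Proof. by rewrite /Qt in_set. Qed.
Lemma Rt_par (V : finType) (A : {set V * V}) u r : r \in Rt A -> (u, r) \in A -> ~~ is_reticulation A u.
Proof. by rewrite inRt => /andP [_ /forallP H] ur; apply: (implyP (H u)). Qed.
Lemma Qt_notret (V : finType) (A : {set V * V}) q : q \in Qt A -> ~~ is_reticulation A q.
Proof. by rewrite inQt => /existsP [r /andP [rR qr]]; apply: Rt_par rR qr. Qed.


Lemma indeg_eq (V : finType) (A B : {set V * V}) v :
  (forall u, ((u, v) \in A) = ((u, v) \in B)) -> indeg A v = indeg B v.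
Proof. by move=> H; apply: eq_card => u; rewrite !inE H. Qed.

Lemma indeg_one (V : finType) (A : {set V * V}) v u :
  (forall w, ((w, v) \in A) = (w == u)) -> indeg A v = 1.
Proof.
move=> H; rewrite /indeg (_ : [set w | (w, v) \in A] = [set u]) ?cards1 //.
by apply/setP => w; rewrite !inE H.
Qed.

Lemma outdeg_le (V : finType) (A B : {set V * V}) v : A \subset B -> outdeg A v <= outdeg B v.
Proof.
by move=> H; apply: subset_leq_card; apply/subsetP => w; rewrite !inE; apply: (subsetP H).
Qed.

Lemma outdeg_pos (V : finType) (A : {set V * V}) v w : (v, w) \in A -> outdeg A v != 0.
Proof. by move=> H; rewrite /outdeg -lt0n card_gt0; apply/set0Pn; exists w; rewrite inE. Qed.

Theorem theorem7 (V : finType) (A : {set V * V}) (X : {set V}) :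
  phylo_network A X -> tree_based A X ->
  forall A' : {set V * V}, A' \subset A ->
    (support_tree A X A' <->
     exists E : {set V * V}, supporting_set A X E /\ A' = arboreal_arcs A X :|: E).
Proof.
move=> HN [T0 HT0] A' sub.
have [Hac [[r0 Hroot] [FX FC]]] := net_facts HN.
split.
- move=> HT; have [sTA [Hin [Hc Hout]]] := HT.
  have L1 := arb_in_tree HN HT.
  exists (A' :&: J_edges A); split.
    split; first exact: subsetIr.
    split.
      move=> q qQ /andP [qX /forallP Hom].
      have := Hout q; rewrite (negbTE qX) => /negbT/outdeg_ch [w qwT].
      have qwA := subsetP sTA _ qwT.
      exists w; rewrite in_setI inJ qwT qwA qQ /=.
      rewrite inRt (implyP (Hom w) qwA) /=; apply/forallP => u; apply/implyP => uwA.
      apply/negP => Ru.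
      have uwT : (u, w) \in A' by apply: L1; rewrite inArb uwA Ru.
      have equ := st_uniq HT uwT qwT; subst u.
      by have := Qt_notret qQ; rewrite Ru.
    move=> r rR.
    have Rr : is_reticulation A r by move: rR; rewrite inRt => /andP [].
    have <- : indeg A' r = 1.
      apply: Hin; case/andP: Rr => H _; by rewrite -lt0n (leq_trans _ H).
    apply: (indeg_eq (v := r)) => q; rewrite in_setI inJ.
    apply/idP/idP => [/andP [] //|qrT]; rewrite qrT (subsetP sTA _ qrT) rR /= andbT.
    by rewrite inQt; apply/existsP; exists r; rewrite rR (subsetP sTA _ qrT).
  apply/setP => [[u v]]; rewrite in_setU in_setI inJ inArb.
  apply/idP/idP; last first.
    by case/orP => [/andP [uvA arb]| /andP [uvT _]] //; apply: L1; rewrite inArb uvA.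
  move=> uvT; have uvA := subsetP sTA _ uvT; rewrite uvT uvA /=.
  case: (boolP [|| is_reticulation A u, is_tree_vertex A v | v \in X]) => //= Hna.
  move: Hna; rewrite !negb_or => /and3P [nRu nTv nXv].
  have Rv : is_reticulation A v.
    by case/or3P: (FC u v uvA) => [/andP[H _]|H|H] //; [rewrite H in nXv | rewrite H in nTv].
  have vR : v \in Rt A.
    rewrite inRt Rv /=; apply/forallP => w; apply/implyP => wvA; apply/negP => Rw.
    have wvT : (w, v) \in A' by apply: L1; rewrite inArb wvA Rw.
    have ew := st_uniq HT wvT uvT; subst w; by rewrite Rw in nRu.
  by rewrite vR andbT inQt; apply/existsP; exists v; rewrite vR uvA.
- move=> [E [[EJ [Hom HR]] eA']]; subst A'.
  set T := arboreal_arcs A X :|: E.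
  have [sT0 [Hin0 [_ Hout0]]] := HT0.
  have L1 := arb_in_tree HN HT0.
  have inT : forall u v, ((u, v) \in T) =
      ((u, v) \in A) && [|| is_reticulation A u, is_tree_vertex A v | v \in X] || ((u, v) \in E).
    by move=> u v; rewrite in_setU inArb.
  have EJ' : forall u v, (u, v) \in E -> [&& (u, v) \in A, u \in Qt A & v \in Rt A].
    by move=> u v /(subsetP EJ); rewrite inJ.
  have Hindeg : forall v, indeg A v != 0 -> indeg T v = 1.
    move=> v /indeg_par [u uvA].
    case/or3P: (FC u v uvA) => [/andP [vX _] | Tv | Rv].
    - rewrite (indeg_eq (B := A)); first by apply: (leafy_indeg1 HN uvA); rewrite vX orbT.
      move=> w; rewrite inT; apply/idP/idP => [/orP [/andP [] // | /EJ' /andP []//] | wvA].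
      by rewrite wvA vX !orbT.
    - rewrite (indeg_eq (B := A)); first by apply: (leafy_indeg1 HN uvA); rewrite Tv.
      move=> w; rewrite inT; apply/idP/idP => [/orP [/andP [] // | /EJ' /andP []//] | wvA].
      by rewrite wvA Tv !orbT.
    case: (boolP (v \in Rt A)) => vR.
      rewrite (indeg_eq (B := E)); first exact: HR.
      move=> w; rewrite inT (ret_notX FX Rv) orbF.
      case: (boolP (is_tree_vertex A v)) => [Tv|_]; first by rewrite tree_notret in Rv.
      rewrite orbF; case: (boolP ((w, v) \in A)) => //= wvA.
      by rewrite (negbTE (Rt_par vR wvA)).
    move: (vR); rewrite inRt Rv /= => /forallPn [w]; rewrite negb_imply negbK => /andP [wvA Rw].
    apply: (indeg_one (u := w)) => x; rewrite inT; apply/idP/idP.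
      case/orP => [/andP [xvA]|/EJ' /and3P [_ _ vR']]; last by rewrite vR' in vR.
      rewrite (ret_notX FX Rv) orbF.
      case: (boolP (is_tree_vertex A v)) => [Tv|_]; first by rewrite tree_notret in Rv.
      rewrite orbF => Rx.
      have xT : (x, v) \in T0 by apply: L1; rewrite inArb xvA Rx.
      have wT : (w, v) \in T0 by apply: L1; rewrite inArb wvA Rw.
      by rewrite (st_uniq HT0 xT wT).
    by move/eqP->; rewrite wvA Rw.
  have Hout : forall v, (outdeg T v == 0) = (v \in X).
    move=> v; case: (boolP (v \in X)) => vX.
      have := outdeg_le v sub; rewrite FX in vX; rewrite (eqP vX) leqn0 => ->; done.
    apply/negbTE; have oA : outdeg A v != 0 by rewrite -FX.
    case: (boolP (is_reticulation A v)) => Rv.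
      have [w vwA] := outdeg_ch oA.
      by apply: (outdeg_pos (w := w)); rewrite inT vwA Rv.
    case: (boolP (omnian A X v)) => Om.
      have := Hout0 v; rewrite (negbTE vX) => /negbT/outdeg_ch [w vwT].
      have vwA := subsetP sT0 _ vwT.
      have Rw : is_reticulation A w by move: Om => /andP [_ /forallP H]; apply: (implyP (H w)).
      have wR : w \in Rt A.
        rewrite inRt Rw /=; apply/forallP => x; apply/implyP => xwA; apply/negP => Rx.
        have xT : (x, w) \in T0 by apply: L1; rewrite inArb xwA Rx.
        by have ex := st_uniq HT0 xT vwT; subst x; rewrite Rx in Rv.
      have vQ : v \in Qt A by rewrite inQt; apply/existsP; exists w; rewrite wR vwA.
      have [r vrE] := Hom v vQ Om.
      by apply: (outdeg_pos (w := r)); rewrite inT vrE orbT.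
    move: Om; rewrite /omnian vX /= => /forallPn [w]; rewrite negb_imply => /andP [vwA nRw].
    apply: (outdeg_pos (w := w)); rewrite inT vwA /=.
    by case/or3P: (FC v w vwA) => [/andP [-> _]|->|H] //; [rewrite !orbT | rewrite orbT | rewrite H in nRw].
  split; first exact: sub.
  split; first exact: Hindeg.
  split; first exact: (conn_root Hac sub Hroot Hindeg).
  exact: Hout.
Qed.
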